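(* Let $m\ge2$ and $G=\langle x_1,x_2\mid c_{12}^m,\ \overline{c_{12}^{(x_1)}}\,c_{12}^{a_1},\ \overline{c_{12}^{(x_2)}}\,c_{12}^{a_2}\rangle$ with $a_1,a_2$ coprime to $m$, whose commutator subgroup $C$ is cyclic of order $m$ generated by $c_{12}$, and let $Z_{CG}=Z(G)\cap C$. If $\{x_1,x_2\}\subset\mathcal C_G(C)$ (equivalently $a_1=a_2=1$), then $Z_{CG}=C$. Otherwise, $Z_{CG}$ is non-trivial if and only if $\gcd(a_1-1,a_2-1,m)\neq1$.
   Context: Notation: $\bar g=g^{-1}$, $c_{gh}=\bar g\,\bar h\,g\,h$, $c^{(g)}=\bar g\,c\,g$, $c_{12}=c_{x_1x_2}$; $\mathcal C_G(C)$ is the centralizer of $C$ and $Z(G)$ the center of $G$. *)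

(* Defs.v *)
From Stdlib Require Export ZArith.
Open Scope Z_scope.

Record Grp := {
  gcar :> Type;
  gmul : gcar -> gcar -> gcar;
  gone : gcar;
  ginv : gcar -> gcar;
  gassoc : forall x y z, gmul x (gmul y z) = gmul (gmul x y) z;
  gmul1l : forall x, gmul gone x = x;
  gmul1r : forall x, gmul x gone = x;
  gmulVl : forall x, gmul (ginv x) x = gone;
  gmulVr : forall x, gmul x (ginv x) = gone }.

Arguments gmul {g}. Arguments gone {g}. Arguments ginv {g}.

Fixpoint npow {G : Grp} (x : G) (n : nat) : G :=
  match n with O => gone | S n => gmul x (npow x n) end.

Definition zpow {G : Grp} (x : G) (k : Z) : G :=
  if (0 <=? k) then npow x (Z.to_nat k) else ginv (npow x (Z.to_nat (- k))).

Definition comm {G : Grp} (g h : G) : G :=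
  gmul (gmul (ginv g) (ginv h)) (gmul g h).

Definition conjg {G : Grp} (c g : G) : G := gmul (gmul (ginv g) c) g.

Inductive gen_by {G : Grp} (S : G -> Prop) : G -> Prop :=
  | gen_one : gen_by S gone
  | gen_in  : forall s, S s -> gen_by S s
  | gen_inv : forall g, gen_by S g -> gen_by S (ginv g)
  | gen_mul : forall g h, gen_by S g -> gen_by S h -> gen_by S (gmul g h).

Definition commutator_subgroup (G : Grp) : G -> Prop :=
  gen_by (fun c => exists g h : G, c = comm g h).

Definition central {G : Grp} (g : G) : Prop := forall h, gmul g h = gmul h g.

Definition centralizes {G : Grp} (g : G) (A : G -> Prop) : Prop :=
  forall c, A c -> gmul g c = gmul c g.

Definition is_hom {G H : Grp} (f : G -> H) : Prop :=
  forall x y, f (gmul x y) = gmul (f x) (f y).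

Definition rels_hold {H : Grp} (m a1 a2 : Z) (y1 y2 : H) : Prop :=
  zpow (comm y1 y2) m = gone /\
  gmul (ginv (conjg (comm y1 y2) y1)) (zpow (comm y1 y2) a1) = gone /\
  gmul (ginv (conjg (comm y1 y2) y2)) (zpow (comm y1 y2) a2) = gone.

Definition is_presentation (G : Grp) (x1 x2 : G) (m a1 a2 : Z) : Prop :=
  (forall g : G, gen_by (fun y => y = x1 \/ y = x2) g) /\
  rels_hold m a1 a2 x1 x2 /\
  (forall (H : Grp) (h1 h2 : H), rels_hold m a1 a2 h1 h2 ->
     exists f : G -> H, is_hom f /\ f x1 = h1 /\ f x2 = h2 /\
       forall f' : G -> H, is_hom f' -> f' x1 = h1 -> f' x2 = h2 ->
         forall g, f' g = f g).

(* Main.v *)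
Require Import Defs.
From Stdlib Require Import ZArith Lia.
Open Scope Z_scope.

Section GL.
Context {G : Grp}.

Lemma mulA (x y z : G) : gmul x (gmul y z) = gmul (gmul x y) z.
Proof. apply gassoc. Qed.

Lemma mul_cancel_l (x y z : G) : gmul x y = gmul x z -> y = z.
Proof.
  intro H. rewrite <- (gmul1l G y), <- (gmul1l G z), <- (gmulVl G x), <- !mulA, H. reflexivity.
Qed.

Lemma inv_uniq (x y : G) : gmul x y = gone -> y = ginv x.
Proof.
  intro H. apply (mul_cancel_l x). rewrite H, gmulVr. reflexivity.
Qed.

Lemma inv_one : ginv (@gone G) = gone.
Proof. symmetry. apply inv_uniq. apply gmul1l. Qed.

Lemma inv_mul (x y : G) : ginv (gmul x y) = gmul (ginv y) (ginv x).
Proof.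
  symmetry. apply inv_uniq. rewrite <- mulA, (mulA y), gmulVr, gmul1l, gmulVr. reflexivity.
Qed.

Lemma inv_inv (x : G) : ginv (ginv x) = x.
Proof. symmetry. apply inv_uniq. apply gmulVl. Qed.

Lemma npow_comm (x : G) n : gmul x (npow x n) = gmul (npow x n) x.
Proof.
  induction n; simpl. rewrite gmul1l, gmul1r; reflexivity.
  rewrite <- mulA, IHn. reflexivity.
Qed.

Lemma zpow_nat (x : G) (n : nat) : zpow x (Z.of_nat n) = npow x n.
Proof. unfold zpow. destruct (Z.leb_spec 0 (Z.of_nat n)); [|lia]. rewrite Nat2Z.id. reflexivity. Qed.

Lemma zpow_negnat (x : G) (n : nat) : zpow x (- Z.of_nat n) = ginv (npow x n).
Proof.
  unfold zpow. destruct n.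
  - simpl. rewrite inv_one. reflexivity.
  - destruct (Z.leb_spec 0 (- Z.of_nat (S n))); [lia|].
    rewrite Z.opp_involutive, Nat2Z.id. reflexivity.
Qed.

Lemma zpow_S (x : G) k : zpow x (Z.succ k) = gmul x (zpow x k).
Proof.
  destruct (Z.le_gt_cases 0 k).
  - destruct (Z_of_nat_complete k H) as [n ->].
    replace (Z.succ (Z.of_nat n)) with (Z.of_nat (S n)) by lia.
    rewrite !zpow_nat. reflexivity.
  - assert (exists n:nat, k = - Z.of_nat (S n)) as [n ->].
    { exists (Z.to_nat (- k - 1)). lia. }
    replace (Z.succ (- Z.of_nat (S n))) with (- Z.of_nat n) by lia.
    rewrite !zpow_negnat. simpl. rewrite npow_comm, inv_mul, mulA, gmulVr, gmul1l.
    reflexivity.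
Qed.

Lemma zpow_P (x : G) k : zpow x (Z.pred k) = gmul (ginv x) (zpow x k).
Proof.
  rewrite <- (Z.succ_pred k) at 2. rewrite zpow_S, mulA, gmulVl, gmul1l. reflexivity.
Qed.

Lemma zpow0 (x : G) : zpow x 0 = gone.
Proof. reflexivity. Qed.

Lemma zpow_add (x : G) a b : zpow x (a + b) = gmul (zpow x a) (zpow x b).
Proof.
  induction a using Z.peano_ind.
  - simpl. rewrite gmul1l. reflexivity.
  - rewrite Z.add_succ_l, !zpow_S, IHa, mulA. reflexivity.
  - rewrite Z.add_pred_l, !zpow_P, IHa, mulA. reflexivity.
Qed.

Lemma zpow_opp (x : G) a : zpow x (- a) = ginv (zpow x a).
Proof. apply inv_uniq. rewrite <- zpow_add. replace (a + - a) with 0 by lia. reflexivity. Qed.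

Lemma zpow_mul (x : G) a k : zpow (zpow x a) k = zpow x (a * k).
Proof.
  induction k using Z.peano_ind.
  - rewrite Z.mul_0_r. reflexivity.
  - rewrite zpow_S, IHk, <- zpow_add. f_equal. lia.
  - rewrite zpow_P, IHk, <- zpow_opp, <- zpow_add. f_equal. lia.
Qed.

Lemma conjg_mul (x y g : G) : conjg (gmul x y) g = gmul (conjg x g) (conjg y g).
Proof.
  unfold conjg. rewrite <- !mulA. f_equal. f_equal.
  rewrite (mulA g), gmulVr, gmul1l. reflexivity.
Qed.

Lemma conjg_inv (x g : G) : conjg (ginv x) g = ginv (conjg x g).
Proof.
  unfold conjg. rewrite !inv_mul, inv_inv, mulA. reflexivity.
Qed.

Lemma zpow_conjg (x g : G) k : conjg (zpow x k) g = zpow (conjg x g) k.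
Proof.
  induction k using Z.peano_ind.
  - simpl. unfold conjg. rewrite gmul1r, gmulVl. reflexivity.
  - rewrite !zpow_S, conjg_mul, IHk. reflexivity.
  - rewrite !zpow_P, conjg_mul, IHk, conjg_inv. reflexivity.
Qed.

Lemma comm_conjg (h x : G) : gmul h x = gmul x h <-> conjg h x = h.
Proof.
  unfold conjg. split; intro H.
  - rewrite <- mulA, H, mulA, gmulVl, gmul1l. reflexivity.
  - rewrite <- H at 2. rewrite <- !mulA, (mulA x), gmulVr, gmul1l. reflexivity.
Qed.

Lemma central_gen (x1 x2 g : G)
  (hgen : forall h : G, gen_by (fun y => y = x1 \/ y = x2) h)
  (h1 : gmul g x1 = gmul x1 g) (h2 : gmul g x2 = gmul x2 g) : central g.
Proof.
  intro h. induction (hgen h) as [|s H|g0 _ IHg|g1 g2 _ IHg1 _ IHg2].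
  - rewrite gmul1l, gmul1r. reflexivity.
  - destruct H as [-> | ->]; assumption.
  - apply (mul_cancel_l g0). rewrite (mulA g0 g), <- IHg, <- mulA, gmulVr, gmul1r.
    rewrite (mulA g0 (ginv g0)), gmulVr, gmul1l. reflexivity.
  - rewrite mulA, IHg1, <- mulA, IHg2, mulA. reflexivity.
Qed.

End GL.

Lemma arith (m a1 a2 k : Z) : 2 <= m -> (m | (a1 - 1) * k) -> (m | (a2 - 1) * k) ->
  Z.gcd (Z.gcd (a1 - 1) (a2 - 1)) m = 1 -> (m | k).
Proof.
  intros hm H1 H2 Hd.
  assert (H : (m | Z.gcd (a1 - 1) (a2 - 1) * Z.abs k)).
  { rewrite <- Z.gcd_mul_mono_r. apply Z.gcd_greatest; assumption. }
  apply Z.divide_abs_r. apply (Z.gauss _ _ _ H). rewrite Z.gcd_comm. exact Hd.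
Qed.

Theorem corollary14p2 (G : Grp) (x1 x2 : G) (m a1 a2 : Z)
  (hm : 2 <= m) (ha1 : Z.gcd a1 m = 1) (ha2 : Z.gcd a2 m = 1)
  (hG : is_presentation G x1 x2 m a1 a2)
  (hCgen : forall g, commutator_subgroup G g <-> exists k : Z, g = zpow (comm x1 x2) k)
  (hCord : forall k : Z, zpow (comm x1 x2) k = gone <-> (m | k)) :
  ((centralizes x1 (commutator_subgroup G) /\ centralizes x2 (commutator_subgroup G)) ->
     forall g, (central g /\ commutator_subgroup G g) <-> commutator_subgroup G g) /\
  (~ (centralizes x1 (commutator_subgroup G) /\ centralizes x2 (commutator_subgroup G)) ->
     ((exists g, central g /\ commutator_subgroup G g /\ g <> gone)
      <-> Z.gcd (Z.gcd (a1 - 1) (a2 - 1)) m <> 1)).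
Proof.
  destruct hG as [hgen [[_ [r1 r2]] _]].
  set (c := comm x1 x2) in *.
  assert (e1 : conjg c x1 = zpow c a1).
  { symmetry. apply (mul_cancel_l (ginv (conjg c x1))). rewrite r1, gmulVl. reflexivity. }
  assert (e2 : conjg c x2 = zpow c a2).
  { symmetry. apply (mul_cancel_l (ginv (conjg c x2))). rewrite r2, gmulVl. reflexivity. }
  assert (key : forall (x : G) a k, conjg c x = zpow c a ->
            (gmul (zpow c k) x = gmul x (zpow c k) <-> (m | (a - 1) * k))).
  { intros x a k e. rewrite comm_conjg, zpow_conjg, e, zpow_mul, <- hCord.
    replace ((a - 1) * k) with (a * k + - k) by ring.
    rewrite zpow_add, zpow_opp. split; intro H.
    - rewrite H, gmulVr. reflexivity.
    - apply (f_equal (fun y => gmul y (zpow c k))) in H.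
      rewrite <- mulA, gmulVl, gmul1r, gmul1l in H. exact H. }
  split.
  - intros [h1 h2] g. split; [tauto|]. intro hg. split; [|exact hg].
    apply (central_gen x1 x2 g hgen); symmetry; [apply h1|apply h2]; exact hg.
  - intros _. split.
    + intros [g [gc [gC gne]]] Hd. apply hCgen in gC as [k ->].
      apply gne. apply hCord. apply (arith m a1 a2 k hm); [ | | exact Hd].
      * apply (key x1); [exact e1|]. apply gc.
      * apply (key x2); [exact e2|]. apply gc.
    + intro Hd.
      set (d := Z.gcd (Z.gcd (a1 - 1) (a2 - 1)) m) in *.
      assert (d0 : 0 <= d) by apply Z.gcd_nonneg.
      assert (dm : (d | m)) by apply Z.gcd_divide_r.
      assert (d1 : (d | a1 - 1)).
      { apply (Z.divide_trans _ (Z.gcd (a1 - 1) (a2 - 1))). apply Z.gcd_divide_l. apply Z.gcd_divide_l. }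
      assert (d2 : (d | a2 - 1)).
      { apply (Z.divide_trans _ (Z.gcd (a1 - 1) (a2 - 1))). apply Z.gcd_divide_l. apply Z.gcd_divide_r. }
      destruct dm as [k hk].
      assert (dpos : 2 <= d).
      { destruct (Z.eq_dec d 0) as [e|]; [rewrite e in hk; lia | lia]. }
      assert (kpos : 0 < k < m) by nia.
      exists (zpow c k). split; [|split].
      * apply (central_gen x1 x2 _ hgen).
        -- apply (key x1 a1 k e1). destruct d1 as [q hq]. exists q. rewrite hq, hk. ring.
        -- apply (key x2 a2 k e2). destruct d2 as [q hq]. exists q. rewrite hq, hk. ring.
      * apply hCgen. exists k. reflexivity.
      * intro H. apply hCord in H. apply Z.divide_pos_le in H; lia.
Qed.
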